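(* For every Hermitian $S=(s_{jl})\in\mathbb{C}^{4\times4}$ and every $\varepsilon\in\{1,-1\}$, $$\max\{p(\theta_1,\theta_2)^2-q(\theta_1,\theta_2):\theta_1,\theta_2\in(-\pi,\pi]\}\ge0 .$$
   Context: Let $S=(s_{jl})_{j,l=1}^4$ be a Hermitian $4\times4$ complex matrix (so $s_{jj}\in\mathbb{R}$ and $s_{lj}=\overline{s_{jl}}$) and $\varepsilon\in\{1,-1\}$. For $\theta_1,\theta_2\in\mathbb{R}$ define $$p=-\tfrac12\Big[s_{11}+s_{22}+s_{33}+s_{44}+2\varepsilon\operatorname{Re}(s_{12}\mathrm{e}^{i\theta_1})+2\varepsilon\operatorname{Re}(s_{34}\mathrm{e}^{i\theta_2})\Big],$$ $$\begin{aligned}q={}&-\big(|s_{13}|^2-s_{11}s_{33}+|s_{14}|^2-s_{11}s_{44}+|s_{23}|^2-s_{22}s_{33}+|s_{24}|^2-s_{22}s_{44}\big)\\&-2\varepsilon\Big[-(s_{33}+s_{44})\operatorname{Re}(s_{12}\mathrm{e}^{i\theta_1})+\operatorname{Re}\big((s_{13}\overline{s_{23}}+s_{14}\overline{s_{24}})\mathrm{e}^{i\theta_1}\big)\\&\qquad-(s_{11}+s_{22})\operatorname{Re}(s_{34}\mathrm{e}^{i\theta_2})+\operatorname{Re}\big((\overline{s_{13}}s_{14}+\overline{s_{23}}s_{24})\mathrm{e}^{i\theta_2}\big)\Big]\\&-2\operatorname{Re}\big((s_{14}\overline{s_{23}}-s_{12}s_{34})\mathrm{e}^{i(\theta_1+\theta_2)}\big)-2\operatorname{Re}\big((s_{13}\overline{s_{24}}-s_{12}\overline{s_{34}})\mathrm{e}^{i(\theta_1-\theta_2)}\big).\end{aligned}$$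 (These are the coefficients of the asymptotic band equation $d^2+2pd+q=0$ for a lattice with coupling $\Psi'_v=S\Psi_v$ at each vertex, where $\varepsilon=(-1)^n$.) *)

(* Defs.v *)
From Stdlib Require Import Reals Lra.
Open Scope R_scope.

Record Cx := mkC { re : R; im : R }.

Definition Cmul (z w : Cx) : Cx :=
  mkC (re z * re w - im z * im w) (re z * im w + im z * re w).
Definition Cadd (z w : Cx) : Cx := mkC (re z + re w) (im z + im w).
Definition Csub (z w : Cx) : Cx := mkC (re z - re w) (im z - im w).
Definition Cconj (z : Cx) : Cx := mkC (re z) (- im z).
Definition Cnorm2 (z : Cx) : R := re z * re z + im z * im z.
Definition expi (t : R) : Cx := mkC (cos t) (sin t).

(* A 4x4 complex matrix, indexed by 1..4 (entries outside are irrelevant). *)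
Definition Mat4 := nat -> nat -> Cx.

Definition in14 (j : nat) : Prop := (1 <= j <= 4)%nat.

Definition Hermitian4 (S : Mat4) : Prop :=
  forall j l, in14 j -> in14 l -> S l j = Cconj (S j l).

Definition pcoef (S : Mat4) (eps t1 t2 : R) : R :=
  - / 2 * ( re (S 1%nat 1%nat) + re (S 2%nat 2%nat) + re (S 3%nat 3%nat) + re (S 4%nat 4%nat)
          + 2 * eps * re (Cmul (S 1%nat 2%nat) (expi t1))
          + 2 * eps * re (Cmul (S 3%nat 4%nat) (expi t2)) ).

Definition qcoef (S : Mat4) (eps t1 t2 : R) : R :=
  let s := fun j l => S j l in
  let d := fun j => re (S j j) in
  - ( Cnorm2 (s 1 3)%nat - d 1%nat * d 3%nat + Cnorm2 (s 1 4)%nat - d 1%nat * d 4%nat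
    + Cnorm2 (s 2 3)%nat - d 2%nat * d 3%nat + Cnorm2 (s 2 4)%nat - d 2%nat * d 4%nat )
  - 2 * eps * ( - (d 3%nat + d 4%nat) * re (Cmul (s 1 2)%nat (expi t1))
      + re (Cmul (Cadd (Cmul (s 1 3)%nat (Cconj (s 2 3)%nat))
                       (Cmul (s 1 4)%nat (Cconj (s 2 4)%nat))) (expi t1))
      - (d 1%nat + d 2%nat) * re (Cmul (s 3 4)%nat (expi t2))
      + re (Cmul (Cadd (Cmul (Cconj (s 1 3)%nat) (s 1 4)%nat)
                       (Cmul (Cconj (s 2 3)%nat) (s 2 4)%nat)) (expi t2)) )
  - 2 * re (Cmul (Csub (Cmul (s 1 4)%nat (Cconj (s 2 3)%nat)) (Cmul (s 1 2)%nat (s 3 4)%nat))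
                 (expi (t1 + t2)))
  - 2 * re (Cmul (Csub (Cmul (s 1 3)%nat (Cconj (s 2 4)%nat)) (Cmul (s 1 2)%nat (Cconj (s 3 4)%nat)))
                 (expi (t1 - t2))).

Definition in_dom (t : R) : Prop := - PI < t <= PI.

Definition Fdisc (S : Mat4) (eps t1 t2 : R) : R :=
  pcoef S eps t1 t2 ^ 2 - qcoef S eps t1 t2.

(* Main.v *)
Require Import Defs.
From Stdlib Require Import Reals Lra Psatz ClassicalEpsilon.
Open Scope R_scope.

Lemma cos_lip : forall a b, Rabs (cos a - cos b) <= Rabs (a - b).
Proof.
  intros a b. destruct (MVT_abs cos (fun x => - sin x) b a) as [c [H _]].
  { intros; apply derivable_pt_lim_cos. }
  rewrite H. pose proof (SIN_bound c).
  assert (Rabs (- sin c) <= 1) by (apply Rabs_le; lra).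
  pose proof (Rabs_pos (a - b)); pose proof (Rabs_pos (- sin c)); nra.
Qed.

Lemma sin_lip : forall a b, Rabs (sin a - sin b) <= Rabs (a - b).
Proof.
  intros a b. destruct (MVT_abs sin cos b a) as [c [H _]].
  { intros; apply derivable_pt_lim_sin. }
  rewrite H. pose proof (COS_bound c).
  assert (Rabs (cos c) <= 1) by (apply Rabs_le; lra).
  pose proof (Rabs_pos (a - b)); pose proof (Rabs_pos (- sin c)); nra.
Qed.

Definition Pf (f : R -> R -> R) : Prop :=
  (exists M, forall x y, Rabs (f x y) <= M) /\
  (exists K, forall x x' y, Rabs (f x y - f x' y) <= K * Rabs (x - x')).

Definition Lin (phi : R -> R -> R) : Prop :=
  exists k, forall x x' y, phi x y - phi x' y = k * (x - x').

Lemma P_const : forall c : R, Pf (fun _ _ => c).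
Proof. intros c; split; [exists (Rabs c); intros; lra|exists 0; intros; unfold Rminus; rewrite Rplus_opp_r, Rabs_R0; lra]. Qed.

Lemma lin_bound : forall phi, Lin phi -> exists K, forall x x' y, Rabs (phi x y - phi x' y) <= K * Rabs (x - x').
Proof. intros phi [k Hk]; exists (Rabs k); intros; rewrite Hk, Rabs_mult; lra. Qed.

Lemma P_cos : forall phi, Lin phi -> Pf (fun x y => cos (phi x y)).
Proof.
  intros phi H; destruct (lin_bound phi H) as [K HK]; split.
  - exists 1; intros; apply Rabs_le; pose proof (COS_bound (phi x y)); lra.
  - exists K; intros; eapply Rle_trans; [apply cos_lip|apply HK].
Qed.

Lemma P_sin : forall phi, Lin phi -> Pf (fun x y => sin (phi x y)).
Proof.
  intros phi H; destruct (lin_bound phi H) as [K HK]; split.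
  - exists 1; intros; apply Rabs_le; pose proof (SIN_bound (phi x y)); lra.
  - exists K; intros; eapply Rle_trans; [apply sin_lip|apply HK].
Qed.

Lemma P_plus : forall f g, Pf f -> Pf g -> Pf (fun x y => f x y + g x y).
Proof.
  intros f g [[M1 H1] [K1 L1]] [[M2 H2] [K2 L2]]; split.
  - exists (M1 + M2); intros; eapply Rle_trans; [apply Rabs_triang|]; specialize (H1 x y); specialize (H2 x y); lra.
  - exists (K1 + K2); intros.
    replace (f x y + g x y - (f x' y + g x' y)) with ((f x y - f x' y) + (g x y - g x' y)) by ring.
    eapply Rle_trans; [apply Rabs_triang|]; specialize (L1 x x' y); specialize (L2 x x' y); lra.
Qed.

Lemma P_opp : forall f, Pf f -> Pf (fun x y => - f x y).
Proof.
  intros f [[M1 H1] [K1 L1]]; split.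
  - exists M1; intros; rewrite Rabs_Ropp; auto.
  - exists K1; intros; replace (- f x y - - f x' y) with (-(f x y - f x' y)) by ring; rewrite Rabs_Ropp; auto.
Qed.

Lemma P_minus : forall f g, Pf f -> Pf g -> Pf (fun x y => f x y - g x y).
Proof. intros f g Hf Hg; apply (P_plus f (fun x y => - g x y)); auto; apply P_opp; auto. Qed.

Lemma P_mult : forall f g, Pf f -> Pf g -> Pf (fun x y => f x y * g x y).
Proof.
  intros f g [[M1 H1] [K1 L1]] [[M2 H2] [K2 L2]]; split.
  - exists (M1 * M2); intros; rewrite Rabs_mult; specialize (H1 x y); specialize (H2 x y).
    apply Rmult_le_compat; auto; apply Rabs_pos.
  - exists (M1 * K2 + M2 * K1); intros.
    replace (f x y * g x y - f x' y * g x' y) with (f x y * (g x y - g x' y) + g x' y * (f x y - f x' y)) by ring.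
    eapply Rle_trans; [apply Rabs_triang|]. rewrite !Rabs_mult.
    specialize (H1 x y); specialize (H2 x' y); specialize (L1 x x' y); specialize (L2 x x' y).
    pose proof (Rabs_pos (f x y)); pose proof (Rabs_pos (g x' y)); pose proof (Rabs_pos (g x y - g x' y));
    pose proof (Rabs_pos (f x y - f x' y)); pose proof (Rabs_pos (x - x')).
    assert (Rabs (f x y) * Rabs (g x y - g x' y) <= M1 * (K2 * Rabs (x - x'))) by (apply Rmult_le_compat; auto).
    assert (Rabs (g x' y) * Rabs (f x y - f x' y) <= M2 * (K1 * Rabs (x - x'))) by (apply Rmult_le_compat; auto).
    nra.
Qed.

Lemma P_pow : forall f n, Pf f -> Pf (fun x y => f x y ^ n).
Proof.
  intros f n Hf; induction n; simpl.
  - apply P_const.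
  - apply (P_mult f (fun x y => f x y ^ n)); auto.
Qed.

Ltac solve_lin := first [exists 0; intros; ring | exists 1; intros; ring | exists (-1); intros; ring].

Ltac solveP := repeat (first
  [ apply P_plus | apply P_minus | apply P_mult | apply P_opp | apply P_pow
  | (apply P_cos; solve_lin) | (apply P_sin; solve_lin) | apply P_const ]).

Lemma F_P : forall S eps, Pf (fun x y => Fdisc S eps x y).
Proof.
  intros. unfold Fdisc, pcoef, qcoef, Cmul, Cadd, Csub, Cconj, Cnorm2, expi; simpl. solveP.
Qed.

Lemma F_P' : forall S eps, Pf (fun y x => Fdisc S eps x y).
Proof.
  intros. unfold Fdisc, pcoef, qcoef, Cmul, Cadd, Csub, Cconj, Cnorm2, expi; simpl. solveP.
Qed.

Lemma lip_cont : forall g K x0, (forall x x', Rabs (g x - g x') <= K * Rabs (x - x')) -> continuity_pt g x0.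
Proof.
  intros g K x0 H e He. exists (e / (Rabs K + 1)).
  assert (0 < Rabs K + 1) by (pose proof (Rabs_pos K); lra).
  split. { apply Rlt_gt. apply Rdiv_lt_0_compat; lra. }
  intros x [_ Hx]. simpl in *. unfold R_dist in *.
  eapply Rle_lt_trans; [apply H|].
  apply Rle_lt_trans with (Rabs K * Rabs (x - x0)).
  { apply Rmult_le_compat_r; [apply Rabs_pos|apply RRle_abs]. }
  apply Rle_lt_trans with ((Rabs K + 1) * Rabs (x - x0)).
  { pose proof (Rabs_pos (x - x0)); nra. }
  apply Rmult_lt_reg_r with (/ (Rabs K + 1)). { apply Rinv_0_lt_compat; lra. }
  replace ((Rabs K + 1) * Rabs (x - x0) * / (Rabs K + 1)) with (Rabs (x - x0)) by (field; lra).
  exact Hx.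
Qed.

Lemma abs_le_b : forall a c, Rabs a <= c -> - c <= a <= c.
Proof. intros a c H; unfold Rabs in H; destruct (Rcase_abs a); lra. Qed.

Lemma max2 : forall f a b, a <= b -> Pf f -> Pf (fun y x => f x y) ->
  exists x0 y0, a <= x0 <= b /\ a <= y0 <= b /\
    forall x y, a <= x <= b -> a <= y <= b -> f x y <= f x0 y0.
Proof.
  intros f a b Hab [_ [K HK]] [_ [K' HK']].
  assert (Hm : forall x, exists y, (forall c, a <= c <= b -> f x c <= f x y) /\ a <= y <= b).
  { intros x. apply continuity_ab_maj; auto. intros c _. apply lip_cont with K'.
    intros; apply HK'. }
  destruct (choice _ Hm) as [m Hmx].
  set (g := fun x => f x (m x)).
  assert (Hg : forall x x', Rabs (g x - g x') <= K * Rabs (x - x')).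
  { intros x x'. unfold g.
    destruct (Hmx x) as [A1 B1]; destruct (Hmx x') as [A2 B2].
    specialize (A1 (m x') B2); specialize (A2 (m x) B1).
    pose proof (HK x x' (m x')); pose proof (HK x x' (m x)).
    apply Rabs_le. split.
    - apply abs_le_b in H; lra.
    - apply abs_le_b in H0; lra. }
  destruct (continuity_ab_maj g a b Hab) as [x0 [Hx0 Hx0b]].
  { intros c _. apply lip_cont with K; auto. }
  exists x0, (m x0). destruct (Hmx x0) as [_ Hb]. repeat split; try lra.
  intros x y Hx Hy. destruct (Hmx x) as [A _]. specialize (A y Hy). specialize (Hx0 x Hx). unfold g in Hx0. lra.
Qed.

Lemma F_per : forall S eps x x' y, cos x = cos x' -> sin x = sin x' ->
  Fdisc S eps x y = Fdisc S eps x' y.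
Proof.
  intros S eps x x' y Hc Hs.
  unfold Fdisc, pcoef, qcoef, Cmul, Cadd, Csub, Cconj, Cnorm2, expi; simpl.
  rewrite !cos_plus, !sin_plus, !cos_minus, !sin_minus, Hc, Hs. reflexivity.
Qed.

Lemma F_grid : forall S eps, (eps = 1 \/ eps = -1) ->
  0 <= Fdisc S eps 0 0 + Fdisc S eps 0 (PI/2) + Fdisc S eps 0 PI + Fdisc S eps 0 (-(PI/2))
     + Fdisc S eps (PI/2) 0 + Fdisc S eps (PI/2) (PI/2) + Fdisc S eps (PI/2) PI + Fdisc S eps (PI/2) (-(PI/2))
     + Fdisc S eps PI 0 + Fdisc S eps PI (PI/2) + Fdisc S eps PI PI + Fdisc S eps PI (-(PI/2))
     + Fdisc S eps (-(PI/2)) 0 + Fdisc S eps (-(PI/2)) (PI/2) + Fdisc S eps (-(PI/2)) PI + Fdisc S eps (-(PI/2)) (-(PI/2)).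
Proof.
  intros S eps He.
  unfold Fdisc, pcoef, qcoef, Cmul, Cadd, Csub, Cconj, Cnorm2, expi; simpl.
  rewrite ?cos_plus, ?sin_plus, ?cos_minus, ?sin_minus.
  rewrite ?cos_neg, ?sin_neg, ?cos_PI2, ?sin_PI2, ?cos_PI, ?sin_PI, ?cos_0, ?sin_0.
  set (d1 := re (S 1%nat 1%nat)). set (d2 := re (S 2%nat 2%nat)).
  set (d3 := re (S 3%nat 3%nat)). set (d4 := re (S 4%nat 4%nat)).
  set (a := re (S 1%nat 2%nat)). set (b := im (S 1%nat 2%nat)).
  set (c := re (S 3%nat 4%nat)). set (d := im (S 3%nat 4%nat)).
  set (e1 := re (S 1%nat 3%nat)). set (f1 := im (S 1%nat 3%nat)).
  set (e2 := re (S 1%nat 4%nat)). set (f2 := im (S 1%nat 4%nat)).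
  set (e3 := re (S 2%nat 3%nat)). set (f3 := im (S 2%nat 3%nat)).
  set (e4 := re (S 2%nat 4%nat)). set (f4 := im (S 2%nat 4%nat)).
  destruct He; subst eps;
  match goal with |- 0 <= ?E =>
    replace E with (4 * (d1 + d2 - d3 - d4)^2 + 8 * (a*a+b*b+c*c+d*d)
       + 16 * (e1*e1+f1*f1+e2*e2+f2*f2+e3*e3+f3*f3+e4*e4+f4*f4)) by field end;
  repeat apply Rplus_le_le_0_compat; try apply Rmult_le_pos; try lra; try apply pow2_ge_0;
  repeat apply Rplus_le_le_0_compat; apply Rle_0_sqr.
Qed.

Lemma F_per2 : forall S eps x y y', cos y = cos y' -> sin y = sin y' ->
  Fdisc S eps x y = Fdisc S eps x y'.
Proof.
  intros S eps x y y' Hc Hs.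
  unfold Fdisc, pcoef, qcoef, Cmul, Cadd, Csub, Cconj, Cnorm2, expi; simpl.
  rewrite !cos_plus, !sin_plus, !cos_minus, !sin_minus, Hc, Hs. reflexivity.
Qed.

Lemma fix_dom : forall t, -PI <= t <= PI -> exists t', in_dom t' /\ cos t = cos t' /\ sin t = sin t'.
Proof.
  intros t Ht. destruct (Req_dec t (-PI)) as [E|E].
  - exists PI. subst t. unfold in_dom. pose proof PI_RGT_0. repeat split; try lra.
    + apply cos_neg.
    + rewrite sin_neg, sin_PI; lra.
  - exists t. unfold in_dom. repeat split; lra.
Qed.

Theorem mainTheorem11 (S : Mat4) (eps : R) :
  Hermitian4 S -> (eps = 1 \/ eps = -1) ->
  exists t1 t2 : R, in_dom t1 /\ in_dom t2 /\
    (forall u1 u2 : R, in_dom u1 -> in_dom u2 -> Fdisc S eps u1 u2 <= Fdisc S eps t1 t2) /\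
    0 <= Fdisc S eps t1 t2.
Proof.
  intros _ He. pose proof PI_RGT_0 as Hpi.
  destruct (max2 (fun x y => Fdisc S eps x y) (-PI) PI ltac:(lra) (F_P S eps) (F_P' S eps))
    as [x0 [y0 [Hx [Hy Hm]]]].
  destruct (fix_dom x0 Hx) as [t1 [D1 [C1 S1]]].
  destruct (fix_dom y0 Hy) as [t2 [D2 [C2 S2]]].
  assert (Eq : Fdisc S eps t1 t2 = Fdisc S eps x0 y0).
  { rewrite (F_per S eps x0 t1 y0 C1 S1), (F_per2 S eps t1 y0 t2 C2 S2). reflexivity. }
  exists t1, t2. split; [auto|split; [auto|split]].
  - intros u1 u2 [A1 A2] [B1 B2]. rewrite Eq. apply Hm; lra.
  - rewrite Eq. pose proof (F_grid S eps He) as G.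
    assert (P1 : forall x y, -PI <= x <= PI -> -PI <= y <= PI -> Fdisc S eps x y <= Fdisc S eps x0 y0) by exact Hm.
    assert (I0 : -PI <= 0 <= PI) by lra.
    assert (I1 : -PI <= PI/2 <= PI) by lra.
    assert (I2 : -PI <= PI <= PI) by lra.
    assert (I3 : -PI <= -(PI/2) <= PI) by lra.
    pose proof (P1 _ _ I0 I0); pose proof (P1 _ _ I0 I1); pose proof (P1 _ _ I0 I2); pose proof (P1 _ _ I0 I3);
    pose proof (P1 _ _ I1 I0); pose proof (P1 _ _ I1 I1); pose proof (P1 _ _ I1 I2); pose proof (P1 _ _ I1 I3);
    pose proof (P1 _ _ I2 I0); pose proof (P1 _ _ I2 I1); pose proof (P1 _ _ I2 I2); pose proof (P1 _ _ I2 I3);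
    pose proof (P1 _ _ I3 I0); pose proof (P1 _ _ I3 I1); pose proof (P1 _ _ I3 I2); pose proof (P1 _ _ I3 I3).
    lra.
Qed.
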